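(* In the setting described in the context, $\frac{qAB-q^{-1}BA}{q-q^{-1}}=abI$, $\frac{qBA^*-q^{-1}A^*B}{q-q^{-1}}=a^*bI$, $\frac{qA^*B^*-q^{-1}B^*A^*}{q-q^{-1}}=a^*b^*I$, $\frac{qB^*A-q^{-1}AB^*}{q-q^{-1}}=ab^*I$.
   Context: $\mathbb K$ is an algebraically closed field, $q\in\mathbb K$ nonzero and not a root of unity, $V$ a nonzero finite-dimensional $\mathbb K$-vector space. A tridiagonal pair on $V$ is an ordered pair $A,A^*$ of linear maps $V\to V$ such that: (i) each of $A,A^*$ is diagonalizable; (ii) there is an ordering $V_0,\dots,V_d$ of the eigenspaces of $A$ with $A^*V_i\subseteq V_{i-1}+V_i+V_{i+1}$ ($V_{-1}=V_{d+1}=0$); (iii) there is an ordering $V^*_0,\dots,V^*_\delta$ of the eigenspaces of $A^*$ with $AV^*_i\subseteq V^*_{i-1}+V^*_i+V^*_{i+1}$ ($V^*_{-1}=V^*_{\delta+1}=0$); (iv) no subspace $W\ne0,V$ satisfies $AW\subseteq W$, $A^*W\subseteq W$. It is known $d=\delta$; orderings as in (ii),(iii) are called standard. Setting: $A,A^*$ is a tridiagonal pair on $V$; $V_0,\dots,V_d$ (resp. $V^*_0,\dots,V^*_d$) is a standard ordering of the eigenspaces of $A$ (resp. $A^*$); the eigenvalue of $A$ on $V_i$ is $aq^{2i-d}$ and that of $A^*$ on $V^*_i$ is $a^*q^{d-2i}$ ($0\le i\le d$) for some nonzero $a,a^*\in\mathbb K$; $b,b^*\in\mathbb K$ are nonzero.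 For $0\le i\le d$ the subspaces $(V^*_0+\cdots+V^*_i)\cap(V_0+\cdots+V_{d-i})$ form a decomposition of $V$ (their sum is direct, equals $V$, each is nonzero), as do the subspaces $(V^*_{d-i}+\cdots+V^*_d)\cap(V_i+\cdots+V_d)$. $B:V\to V$ is the linear map acting as $bq^{2i-d}I$ on $(V^*_0+\cdots+V^*_i)\cap(V_0+\cdots+V_{d-i})$ for each $i$, and $B^*:V\to V$ is the linear map acting as $b^*q^{d-2i}I$ on $(V^*_{d-i}+\cdots+V^*_d)\cap(V_i+\cdots+V_d)$ for each $i$. *)

(* Defs.v *)
From HB Require Import structures.
From mathcomp Require Import all_boot all_order all_algebra.
Set Implicit Arguments. Unset Strict Implicit. Unset Printing Implicit Defensive.
Import Order.TTheory GRing.Theory Num.Theory.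
Local Open Scope ring_scope.
Local Open Scope vspace_scope.
Import passmx.

Section TD.
Variables (K : fieldType) (vT : vectType K).

Definition diagonalizable (f : 'End(vT)) : Prop :=
  exists s : seq K, (\sum_(x <- s) leigenspace f x)%VS = fullv.

Definition eigen_ordering (f : 'End(vT)) (d : nat) (th : nat -> K) : Prop :=
  [/\ (forall i j, (i <= d)%N -> (j <= d)%N -> th i = th j -> i = j),
      (forall i, (i <= d)%N -> leigenspace f (th i) != 0%VS) &
      (forall x, leigenspace f x != 0%VS -> exists2 i, (i <= d)%N & x = th i)].

(* V_i with the convention V_{-1} = V_{d+1} = 0 *)
Definition Vpred (f : 'End(vT)) (th : nat -> K) (i : nat) : {vspace vT} :=
  if i is i'.+1 then leigenspace f (th i') else 0%VS.
Definition Vsucc (f : 'End(vT)) (d : nat) (th : nat -> K) (i : nat) : {vspace vT} :=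
  if (i < d)%N then leigenspace f (th i.+1) else 0%VS.

Definition standard_ordering (f g : 'End(vT)) (d : nat) (th : nat -> K) : Prop :=
  eigen_ordering f d th /\
  forall i, (i <= d)%N ->
    (g @: leigenspace f (th i) <= Vpred f th i + leigenspace f (th i) + Vsucc f d th i)%VS.

Definition tridiagonal_pair (A As : 'End(vT)) : Prop :=
  [/\ diagonalizable A, diagonalizable As,
      (exists d th, standard_ordering A As d th),
      (exists d th, standard_ordering As A d th) &
      (forall W : {vspace vT}, (A @: W <= W)%VS -> (As @: W <= W)%VS ->
         W = 0%VS \/ W = fullv)].

Definition Udec (A As : 'End(vT)) (d : nat) (th ths : nat -> K) (i : nat)
  : {vspace vT} :=
  ((\sum_(0 <= h < i.+1) leigenspace As (ths h)) :&:
   (\sum_(0 <= h < (d - i).+1) leigenspace A (th h)))%VS.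

Definition Udec_star (A As : 'End(vT)) (d : nat) (th ths : nat -> K) (i : nat)
  : {vspace vT} :=
  ((\sum_(d - i <= h < d.+1) leigenspace As (ths h)) :&:
   (\sum_(i <= h < d.+1) leigenspace A (th h)))%VS.

End TD.

(* Main.v *)
Require Import Defs.
From HB Require Import structures.
From mathcomp Require Import all_boot all_order all_algebra.
From mathcomp Require Import zify ring.
Import Order.TTheory GRing.Theory Num.Theory.
Local Open Scope ring_scope.
Import passmx.

Section Gen.
Variables (K : fieldType) (vT : vectType K).
Local Open Scope vspace_scope.

Lemma eigP (f : 'End(vT)) x v : reflect (f v = x *: v) (v \in leigenspace f x).
Proof.
rewrite /leigenspace memv_ker !lfunE /= opp_lfunE scale_lfunE id_lfunE subr_eq0; exact: eqP.
Qed.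

Lemma sum_nat_ind (P : {vspace vT} -> Prop) (F : nat -> {vspace vT}) m n :
  P 0%VS -> (forall X Y, P X -> P Y -> P (X + Y)%VS) ->
  (forall h, (m <= h < n)%N -> P (F h)) -> P (\sum_(m <= h < n) F h)%VS.
Proof.
move=> P0 PD PF; rewrite big_nat_cond; elim/big_ind: _ => // h /andP[hh _].
exact: PF.
Qed.

Lemma sum_sub_nat (F : nat -> {vspace vT}) V m n :
  (forall h, (m <= h < n)%N -> (F h <= V)%VS) -> (\sum_(m <= h < n) F h <= V)%VS.
Proof.
move=> hF; apply: (@sum_nat_ind (fun W => (W <= V)%VS)) => //.
  exact: sub0v.
by move=> X Y hX hY; rewrite subv_add hX hY.
Qed.

Lemma sub_sum_nat (F : nat -> {vspace vT}) m n k :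
  (m <= k < n)%N -> (F k <= \sum_(m <= h < n) F h)%VS.
Proof.
move=> /andP[hmk hkn].
rewrite (@big_cat_nat _ _ _ k) //=; last exact: ltnW.
rewrite (@big_ltn _ _ _ k) //.
exact: subv_trans (addvSl _ _) (addvSr _ _).
Qed.

Lemma eig_inv (f : 'End(vT)) (th : nat -> K) m n :
  (f @: (\sum_(m <= h < n) leigenspace f (th h)) <= \sum_(m <= h < n) leigenspace f (th h))%VS.
Proof.
rewrite limg_sum; apply: sum_sub_nat => h hh.
apply: (@subv_trans _ _ (leigenspace f (th h))); last first.
  exact: (@sub_sum_nat (fun h => leigenspace f (th h)) m n h hh).
apply/subvP => _ /memv_imgP[u /eigP hu ->]; rewrite hu.
by apply: rpredZ; apply/eigP; rewrite hu.
Qed.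

Lemma L1 (f : 'End(vT)) x V v : (f @: V <= V)%VS ->
  v \in (leigenspace f x + V)%VS -> f v - x *: v \in V.
Proof.
move=> hV /memv_addP[e /eigP he [w hw ->]].
rewrite linearD /= he scalerDr opprD addrACA subrr add0r.
by apply: rpredB; [apply: (subvP hV); apply: memv_img|apply: rpredZ].
Qed.

Lemma ext_sum (U : nat -> {vspace vT}) d (F G : 'End(vT)) :
  (\sum_(0 <= i < d.+1) U i)%VS = fullv ->
  (forall i v, (i <= d)%N -> v \in U i -> F v = G v) -> F = G.
Proof.
move=> hsum hFG; apply/lfunP => v.
have : v \in fullv by exact: memvf.
rewrite -hsum; move: v.
apply: (@sum_nat_ind (fun W => forall v, v \in W -> F v = G v)).
- by move=> v; rewrite memv0 => /eqP ->; rewrite !linear0.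
- move=> X Y hX hY v /memv_addP[x hx [y hy ->]].
  by rewrite !linearD /= hX // hY.
- move=> h /andP[_ hh] v hv; exact: (hFG h v hh hv).
Qed.


Lemma subvT (U V W : {vspace vT}) : (U <= V -> V <= W -> U <= W)%VS.
Proof. move=> h1 h2; exact: (subv_trans h1 h2). Qed.

Definition Fw (f : 'End(vT)) (th : nat -> K) j :=
  (\sum_(0 <= h < j.+1) leigenspace f (th h))%VS.
Definition Bw (f : 'End(vT)) d (th : nat -> K) j :=
  (\sum_(d - j <= h < d.+1) leigenspace f (th h))%VS.

Lemma Fa f th j v : v \in Fw f th j ->
  f v - th j *: v \in (if j is j'.+1 then Fw f th j' else 0%VS).
Proof.
rewrite /Fw; case: j => [|j].
  by rewrite big_nat1 => /eigP ->; rewrite subrr rpred0.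
rewrite big_nat_recr //= addvC => hv; exact: (L1 _ _ _ _ (eig_inv _ _ _ _) hv).
Qed.

Lemma Ba f d th j v : (j <= d)%N -> v \in Bw f d th j ->
  f v - th (d - j)%N *: v \in (if j is j'.+1 then Bw f d th j' else 0%VS).
Proof.
rewrite /Bw; case: j => [|j] hj.
  by rewrite subn0 big_nat1 => /eigP ->; rewrite subrr rpred0.
rewrite big_ltn; last by rewrite ltnS leq_subr.
rewrite subnSK // => hv; exact: (L1 _ _ _ _ (eig_inv _ _ _ _) hv).
Qed.

Lemma Fmono f th i : (Fw f th i <= Fw f th i.+1)%VS.
Proof.
apply: sum_sub_nat => h /andP[_ hh].
apply: (@sub_sum_nat (fun h => leigenspace f (th h))); lia.
Qed.

Lemma Bmono f d th i : (Bw f d th i <= Bw f d th i.+1)%VS.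
Proof.
apply: sum_sub_nat => h /andP[h1 hh].
apply: (@sub_sum_nat (fun h => leigenspace f (th h))); lia.
Qed.

Lemma Fb f g d th : standard_ordering f g d th -> forall i, (i < d)%N ->
  (g @: Fw f th i <= Fw f th i.+1)%VS.
Proof.
move=> [_ hst] i hi; rewrite /Fw limg_sum; apply: sum_sub_nat => h /andP[_ hh].
have hhd : (h <= d)%N by lia.
apply: (subvT _ _ _ (hst h hhd)).
rewrite !subv_add; apply/andP; split; first (apply/andP; split).
- case: h hh hhd => [|h] hh hhd /=; first exact: sub0v.
  apply: (@sub_sum_nat (fun h => leigenspace f (th h))); lia.
- apply: (@sub_sum_nat (fun h => leigenspace f (th h))); lia.
- rewrite /Vsucc; case: ifP => _; last exact: sub0v.
  apply: (@sub_sum_nat (fun h => leigenspace f (th h))); lia.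
Qed.

Lemma Bb f g d th : standard_ordering f g d th -> forall i, (i < d)%N ->
  (g @: Bw f d th i <= Bw f d th i.+1)%VS.
Proof.
move=> [_ hst] i hi; rewrite /Bw limg_sum; apply: sum_sub_nat => h /andP[h1 hh].
have hhd : (h <= d)%N by lia.
apply: (subvT _ _ _ (hst h hhd)).
rewrite !subv_add; apply/andP; split; first (apply/andP; split).
- case: h h1 hh hhd => [|h] h1 hh hhd /=; first exact: sub0v.
  apply: (@sub_sum_nat (fun h => leigenspace f (th h))); lia.
- apply: (@sub_sum_nat (fun h => leigenspace f (th h))); lia.
- rewrite /Vsucc; case: ifP => hd; last exact: sub0v.
  apply: (@sub_sum_nat (fun h => leigenspace f (th h))); lia.
Qed.


Section Core.
Variables (S T : nat -> {vspace vT}) (d : nat) (A As : 'End(vT)) (th ths : nat -> K).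
Hypothesis ha : forall j v, (j <= d)%N -> v \in T j ->
  A v - th j *: v \in (if j is j'.+1 then T j' else 0%VS).
Hypothesis hb : forall i, (i < d)%N -> (A @: S i <= S i.+1)%VS.
Hypothesis hbm : forall i, (S i <= S i.+1)%VS.
Hypothesis hc : forall i v, (i <= d)%N -> v \in S i ->
  As v - ths i *: v \in (if i is i'.+1 then S i' else 0%VS).
Hypothesis hd : forall j, (j < d)%N -> (As @: T j <= T j.+1)%VS.
Hypothesis hdm : forall j, (T j <= T j.+1)%VS.

Definition Uc i := (S i :&: T (d - i))%VS.

Lemma upA i v : (i <= d)%N -> v \in Uc i ->
  A v - th (d - i)%N *: v \in (if (i < d)%N then Uc i.+1 else 0%VS).
Proof.
move=> hi /memv_capP[hS hT].
have := ha (d - i) v (leq_subr _ _) hT.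
case: ltnP => hid.
- rewrite -(subnSK hid) /= => hT'.
  rewrite /Uc memv_cap hT' andbT.
  have h1 := subvP (hb i hid) _ (memv_img A hS).
  have h2 := subvP (hbm i) _ hS.
  by rewrite rpredB // rpredZ.
- have -> : (d - i = 0)%N by lia.
  by [].
Qed.

Lemma downAs i v : (i <= d)%N -> v \in Uc i ->
  As v - ths i *: v \in (if i is i'.+1 then Uc i' else 0%VS).
Proof.
move=> hi /memv_capP[hS hT].
have := hc i v hi hS.
case: i hi hS hT => [|i] hi hS hT //= hS'.
rewrite /Uc memv_cap hS' /=.
have hid : (i < d)%N by lia.
rewrite -(subnSK hid).
apply: rpredB; last by apply: rpredZ; apply: (subvP (hdm _)).
have hdd : (d - i.+1 < d)%N by lia.
exact: (subvP (hd _ hdd) _ (memv_img As hT)).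
Qed.

Lemma spanU (hirr : forall W : {vspace vT}, (A @: W <= W)%VS -> (As @: W <= W)%VS ->
         W = 0%VS \/ W = fullv)
  (hTd : T d = fullv) (hS0 : S 0 != 0%VS) :
  (\sum_(0 <= i < d.+1) Uc i)%VS = fullv.
Proof.
set W := (\sum_(0 <= i < d.+1) Uc i)%VS.
have memW i v : (i <= d)%N -> v \in Uc i -> v \in W.
  move=> hi hv; apply: (subvP (@sub_sum_nat Uc 0 d.+1 i _)) => //.
have hA : (A @: W <= W)%VS.
  rewrite /W limg_sum; apply: sum_sub_nat => i /andP[_ hi].
  apply/subvP => _ /memv_imgP[v hv ->].
  rewrite -(subrK (th (d - i)%N *: v) (A v)); apply: rpredD; last first.
    by apply: rpredZ; apply: memW hi hv.
  have := @upA i v hi hv; case: ifP => hid; first by apply: memW.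
  by rewrite memv0 => /eqP ->; rewrite rpred0.
have hAs : (As @: W <= W)%VS.
  rewrite /W limg_sum; apply: sum_sub_nat => i /andP[_ hi].
  apply/subvP => _ /memv_imgP[v hv ->].
  rewrite -(subrK (ths i *: v) (As v)); apply: rpredD; last first.
    by apply: rpredZ; apply: memW hi hv.
  have := @downAs i v hi hv; case: i hi hv => [|i] hi hv.
    by rewrite memv0 => /eqP ->; rewrite rpred0.
  by apply: memW; apply: ltnW.
case: (hirr W hA hAs) => // hW0.
have := @sub_sum_nat Uc 0 d.+1 0 (erefl _).
rewrite -/W hW0 subv0 /Uc subn0 hTd capvf.
by rewrite (negbTE hS0).
Qed.

End Core.


Lemma full_Fw (f : 'End(vT)) (d : nat) (th : nat -> K) : Defs.diagonalizable f -> eigen_ordering f d th ->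
  Fw f th d = fullv.
Proof.
move=> [s hs] [_ _ hcov]; apply/eqP; rewrite eqEsubv subvf /= -hs.
elim/big_ind: _ => [|X Y hX hY|x _]; first exact: sub0v.
  by rewrite subv_add hX hY.
case: (eqVneq (leigenspace f x) 0%VS) => [->|hx]; first exact: sub0v.
have [i hi ->] := hcov x hx.
by apply: (@sub_sum_nat (fun h => leigenspace f (th h))); lia.
Qed.

Local Close Scope vspace_scope.

Lemma alg1 (v w : vT) (r s al ga mu k : K) :
  r - s != 0%R -> r * ga = s * mu -> al * ga = k ->
  (r - s)^-1 *: (r *: (ga *: (al *: v + w)) - s *: ((al * ga) *: v + mu *: w)) = k *: v.
Proof.
move=> hrs e1 e2.
have -> : r *: (ga *: (al *: v + w)) - s *: ((al * ga) *: v + mu *: w)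
    = ((r - s) * (al * ga)) *: v.
  rewrite !scalerDr !scalerA opprD addrACA -!scalerBl e1 subrr scale0r addr0.
  by congr (_ *: _); rewrite -e1; ring.
rewrite scalerA -e2; congr (_ *: _); field; exact: hrs.
Qed.

Lemma alg2 (v w : vT) (r s al ga mu k : K) :
  r - s != 0%R -> r * mu = s * ga -> al * ga = k ->
  (r - s)^-1 *: (r *: ((al * ga) *: v + mu *: w) - s *: (ga *: (al *: v + w))) = k *: v.
Proof.
move=> hrs e1 e2.
have -> : r *: ((al * ga) *: v + mu *: w) - s *: (ga *: (al *: v + w))
    = ((r - s) * (al * ga)) *: v.
  rewrite !scalerDr !scalerA opprD addrACA -!scalerBl e1 subrr scale0r addr0.

  by congr (_ *: _); ring.
rewrite scalerA -e2; congr (_ *: _); field; exact: hrs.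
Qed.

Lemma calc1p (X Bm : 'End(vT)) (v : vT) (r s al ga mu k : K) :
  r - s != 0%R -> r * ga = s * mu -> al * ga = k -> Bm v = ga *: v ->
  Bm (X v - al *: v) = mu *: (X v - al *: v) ->
  (r - s)^-1 *: (r *: X (Bm v) - s *: Bm (X v)) = k *: v.
Proof.
move=> hrs e1 e2 hBv; set w := X v - al *: v => hBw.
have hX : X v = al *: v + w by rewrite /w addrC subrK.
have h1 : X (Bm v) = ga *: X v by rewrite hBv linearZ.
have h2 : Bm (X v) = (al * ga) *: v + mu *: w.
  by rewrite hX linearD linearZ /= hBv hBw scalerA.
rewrite h1 h2 hX.
exact: alg1.
Qed.

Lemma calc2p (X Bm : 'End(vT)) (v : vT) (r s al ga mu k : K) :
  r - s != 0%R -> r * mu = s * ga -> al * ga = k -> Bm v = ga *: v ->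
  Bm (X v - al *: v) = mu *: (X v - al *: v) ->
  (r - s)^-1 *: (r *: Bm (X v) - s *: X (Bm v)) = k *: v.
Proof.
move=> hrs e1 e2 hBv; set w := X v - al *: v => hBw.
have hX : X v = al *: v + w by rewrite /w addrC subrK.
have h1 : X (Bm v) = ga *: X v by rewrite hBv linearZ.
have h2 : Bm (X v) = (al * ga) *: v + mu *: w.
  by rewrite hX linearD linearZ /= hBv hBw scalerA.
rewrite h1 h2 hX.
exact: alg2.
Qed.

Lemma calc1 (X Bm : 'End(vT)) (v : vT) (r s al ga mu k : K) :
  r - s != 0%R -> r * ga = s * mu -> al * ga = k -> Bm v = ga *: v ->
  Bm (X v - al *: v) = mu *: (X v - al *: v) ->
  ((r - s)^-1 *: (r *: (X \o Bm) - s *: (Bm \o X)))%VF v = (k *: \1)%VF v.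
Proof.
move=> h1 h2 h3 h4 h5; rewrite scale_lfunE add_lfunE opp_lfunE !scale_lfunE !comp_lfunE id_lfunE.
exact (@calc1p X Bm v r s al ga mu k h1 h2 h3 h4 h5).
Qed.

Lemma calc2 (X Bm : 'End(vT)) (v : vT) (r s al ga mu k : K) :
  r - s != 0%R -> r * mu = s * ga -> al * ga = k -> Bm v = ga *: v ->
  Bm (X v - al *: v) = mu *: (X v - al *: v) ->
  ((r - s)^-1 *: (r *: (Bm \o X) - s *: (X \o Bm)))%VF v = (k *: \1)%VF v.
Proof.
move=> h1 h2 h3 h4 h5; rewrite scale_lfunE add_lfunE opp_lfunE !scale_lfunE !comp_lfunE id_lfunE.
exact (@calc2p X Bm v r s al ga mu k h1 h2 h3 h4 h5).
Qed.

End Gen.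

Arguments Fw {K vT}.
Arguments Bw {K vT}.
Arguments Uc {K vT}.

Lemma qshift (K : fieldType) (q c : K) (m n : int) : q != 0 -> n = m + 2 ->
  q * (c * q ^ m) = q^-1 * (c * q ^ n).
Proof.
move=> hq ->.
rewrite (expfzDr _ _ hq).
have -> : q ^ (2 : int) = q * q by rewrite -expr2.
field; exact: hq.
Qed.

Lemma qcancel (K : fieldType) (q c e : K) (m n : int) : q != 0 -> n = - m ->
  (c * q ^ m) * (e * q ^ n) = c * e.
Proof. by move=> hq ->; rewrite mulrACA -(expfzDr _ _ hq) subrr expr0z mulr1. Qed.

Theorem theorem7p1 (K : closedFieldType) (vT : vectType K) (q : K)
  (hq0 : q != 0) (hq : forall n : nat, (0 < n)%N -> q ^+ n != 1)
  (hV : (0 < \dim (fullv : {vspace vT}))%N)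
  (A As : 'End(vT)) (hTD : tridiagonal_pair A As)
  (d : nat) (a as_ : K) (ha : a != 0) (has : as_ != 0)
  (hstd : standard_ordering A As d (fun i => a * q ^ ((2 * i)%:Z - d%:Z)))
  (hstds : standard_ordering As A d (fun i => as_ * q ^ (d%:Z - (2 * i)%:Z)))
  (b bs : K) (hb : b != 0) (hbs : bs != 0) (B Bs : 'End(vT))
  (hB : forall i : nat, (i <= d)%N -> forall v : vT,
     v \in Udec A As d (fun i => a * q ^ ((2 * i)%:Z - d%:Z))
                       (fun i => as_ * q ^ (d%:Z - (2 * i)%:Z)) i ->
     B v = (b * q ^ ((2 * i)%:Z - d%:Z)) *: v)
  (hBs : forall i : nat, (i <= d)%N -> forall v : vT,
     v \in Udec_star A As d (fun i => a * q ^ ((2 * i)%:Z - d%:Z))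
                       (fun i => as_ * q ^ (d%:Z - (2 * i)%:Z)) i ->
     Bs v = (bs * q ^ (d%:Z - (2 * i)%:Z)) *: v) :
  [/\ (q - q^-1)^-1 *: (q *: (A \o B) - q^-1 *: (B \o A))%VF = (a * b) *: \1%VF,
      (q - q^-1)^-1 *: (q *: (B \o As) - q^-1 *: (As \o B))%VF = (as_ * b) *: \1%VF,
      (q - q^-1)^-1 *: (q *: (As \o Bs) - q^-1 *: (Bs \o As))%VF = (as_ * bs) *: \1%VF &
      (q - q^-1)^-1 *: (q *: (Bs \o A) - q^-1 *: (A \o Bs))%VF = (a * bs) *: \1%VF].
Proof.
pose th := fun i : nat => a * q ^ ((2 * i)%:Z - d%:Z).
pose ths := fun i : nat => as_ * q ^ (d%:Z - (2 * i)%:Z).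
have hq2 : q - q^-1 != 0.
  apply/eqP => h; move: (hq 2%N isT); rewrite expr2.
  move/eqP: h; rewrite subr_eq0 => /eqP h.
  by rewrite {1}h mulVf // eqxx.
case: hTD => diagA diagAs _ _ hirr.
have [[injA nzA covA] stA] := hstd.
have [[injAs nzAs covAs] stAs] := hstds.
have hTd : Fw A th d = fullv by apply: full_Fw.
pose S1 := Fw As ths. pose T1 := Fw A th.
have ha1 : forall j v, (j <= d)%N -> v \in T1 j ->
    A v - th j *: v \in (if j is j'.+1 then T1 j' else 0%VS).
  by move=> j v _ hv; apply: Fa.
have hb1 : forall i, (i < d)%N -> (A @: S1 i <= S1 i.+1)%VS.
  by move=> i hi; apply: Fb hstds _ hi.
have hbm1 : forall i, (S1 i <= S1 i.+1)%VS by move=> i; apply: Fmono.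
have hc1 : forall i v, (i <= d)%N -> v \in S1 i ->
    As v - ths i *: v \in (if i is i'.+1 then S1 i' else 0%VS).
  by move=> i v _ hv; apply: Fa.
have hd1 : forall j, (j < d)%N -> (As @: T1 j <= T1 j.+1)%VS.
  by move=> i hi; apply: Fb hstd _ hi.
have hdm1 : forall j, (T1 j <= T1 j.+1)%VS by move=> i; apply: Fmono.
have span1 : (\sum_(0 <= i < d.+1) Uc S1 T1 d i)%VS = fullv.
  apply: (@spanU K vT S1 T1 d A As th ths ha1 hb1 hbm1 hc1 hd1 hdm1 hirr hTd).
  by rewrite /S1 /Fw big_nat1; apply: nzAs.
pose S2 := Bw As d ths. pose T2 := Bw A d th.
pose th2 := fun j => th (d - j)%N. pose ths2 := fun j => ths (d - j)%N.
have ha2 : forall j v, (j <= d)%N -> v \in T2 j ->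
    A v - th2 j *: v \in (if j is j'.+1 then T2 j' else 0%VS).
  by move=> j v hj hv; apply: Ba.
have hb2 : forall i, (i < d)%N -> (A @: S2 i <= S2 i.+1)%VS.
  by move=> i hi; apply: Bb hstds _ hi.
have hbm2 : forall i, (S2 i <= S2 i.+1)%VS by move=> i; apply: Bmono.
have hc2 : forall i v, (i <= d)%N -> v \in S2 i ->
    As v - ths2 i *: v \in (if i is i'.+1 then S2 i' else 0%VS).
  by move=> i v hi hv; apply: Ba.
have hd2 : forall j, (j < d)%N -> (As @: T2 j <= T2 j.+1)%VS.
  by move=> i hi; apply: Bb hstd _ hi.
have hdm2 : forall j, (T2 j <= T2 j.+1)%VS by move=> i; apply: Bmono.
have hTd2 : T2 d = fullv by rewrite /T2 /Bw subnn; exact: hTd.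
have span2 : (\sum_(0 <= i < d.+1) Uc S2 T2 d i)%VS = fullv.
  apply: (@spanU K vT S2 T2 d A As th2 ths2 ha2 hb2 hbm2 hc2 hd2 hdm2 hirr hTd2).
  by rewrite /S2 /Bw subn0 big_nat1; apply: nzAs.
have conv2 : forall i v, (i <= d)%N -> v \in Uc S2 T2 d i ->
    v \in Udec_star A As d th ths i.
  by move=> i v hi; rewrite /Uc /S2 /T2 /Bw /Udec_star subKn.
split.
- apply: (@ext_sum K vT (Uc S1 T1 d) d _ _ span1) => i v hi hv.
  apply: (@calc1 K vT A B v q q^-1 (th (d - i)%N) (b * q ^ ((2 * i)%:Z - d%:Z))
            (b * q ^ ((2 * i)%:Z - d%:Z + 2)) (a * b) hq2).
  + by apply: qshift.
  + by apply: qcancel => //; lia.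
  + exact: hB.
  + have := @upA K vT S1 T1 d A th ha1 hb1 hbm1 i v hi hv.
    case: ifP => hid hw.
      have -> : (2 * i)%:Z - d%:Z + 2 = (2 * i.+1)%:Z - d%:Z by lia.
      exact: hB.
    by rewrite memv0 in hw; rewrite (eqP hw) linear0 scaler0.
- apply: (@ext_sum K vT (Uc S1 T1 d) d _ _ span1) => i v hi hv.
  apply: (@calc2 K vT As B v q q^-1 (ths i) (b * q ^ ((2 * i)%:Z - d%:Z))
            (b * q ^ ((2 * i)%:Z - d%:Z - 2)) (as_ * b) hq2).
  + by apply: qshift => //; lia.
  + by apply: qcancel => //; lia.
  + exact: hB.
  + have := @downAs K vT S1 T1 d As ths hc1 hd1 hdm1 i v hi hv.
    case: i hi hv => [|i] hi hv hw.
      by rewrite memv0 in hw; rewrite (eqP hw) linear0 scaler0.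
    have -> : (2 * i.+1)%:Z - d%:Z - 2 = (2 * i)%:Z - d%:Z by lia.
    by apply: hB => //; apply: ltnW.
- apply: (@ext_sum K vT (Uc S2 T2 d) d _ _ span2) => i v hi hv.
  apply: (@calc1 K vT As Bs v q q^-1 (ths2 i) (bs * q ^ (d%:Z - (2 * i)%:Z))
            (bs * q ^ (d%:Z - (2 * i)%:Z + 2)) (as_ * bs) hq2).
  + by apply: qshift.
  + by apply: qcancel => //; lia.
  + by apply: hBs => //; apply: conv2.
  + have := @downAs K vT S2 T2 d As ths2 hc2 hd2 hdm2 i v hi hv.
    case: i hi hv => [|i] hi hv hw.
      by rewrite memv0 in hw; rewrite (eqP hw) linear0 scaler0.
    have -> : d%:Z - (2 * i.+1)%:Z + 2 = d%:Z - (2 * i)%:Z by lia.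
    have hi' : (i <= d)%N by apply: ltnW.
    by apply: hBs => //; apply: conv2.
- apply: (@ext_sum K vT (Uc S2 T2 d) d _ _ span2) => i v hi hv.
  apply: (@calc2 K vT A Bs v q q^-1 (th2 (d - i)%N) (bs * q ^ (d%:Z - (2 * i)%:Z))
            (bs * q ^ (d%:Z - (2 * i)%:Z - 2)) (a * bs) hq2).
  + by apply: qshift => //; lia.
  + by apply: qcancel => //; lia.
  + by apply: hBs => //; apply: conv2.
  + have := @upA K vT S2 T2 d A th2 ha2 hb2 hbm2 i v hi hv.
    case: ifP => hid hw.
      have -> : d%:Z - (2 * i)%:Z - 2 = d%:Z - (2 * i.+1)%:Z by lia.
      by apply: hBs => //; apply: conv2.
    by rewrite memv0 in hw; rewrite (eqP hw) linear0 scaler0.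
Qed.
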